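(* Let $\alpha\in[0,\pi/2)$, $A,B\in\Pi^n_{s,\alpha}$ and $q\in\mathbb{C}$ with $0<|q|\le1$. Then \[ |q|\,w_q(AB\pm BA)\le 2\sec(\alpha)\min\{w_q(A)\|B\|,\ w_q(B)\|A\|\}. \]
   Context: $M_n$ is the algebra of complex $n\times n$ matrices with the operator norm $\|\cdot\|$. For $|q|\le1$, $w_q(A)=\sup\{|\langle Ax,y\rangle|: \|x\|=\|y\|=1,\ \langle x,y\rangle=q\}$. $W(A)=\{\langle Ax,x\rangle:\|x\|=1\}$, $S_\alpha=\{z:\operatorname{Re}z>0,\ |\operatorname{Im}z|\le\tan(\alpha)\operatorname{Re}z\}$ and $\Pi^n_{s,\alpha}=\{A\in M_n: W(A)\subseteq S_\alpha\}$. *)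

(* Defs.v *)
From HB Require Import structures.
From mathcomp Require Import all_boot all_order all_algebra.
From mathcomp Require Import all_classical reals trigo.
From mathcomp Require Import complex.

Set Implicit Arguments.
Unset Strict Implicit.
Unset Printing Implicit Defensive.

Import Order.TTheory GRing.Theory Num.Theory.
Local Open Scope ring_scope.
Local Open Scope classical_set_scope.

Section Defs.
Variable R : realType.
Local Notation C := R[i].

Definition cdot (n : nat) (x y : 'cV[C]_n) : C := \sum_(k < n) x k 0 * (y k 0)^*.

Definition vnorm (n : nat) (x : 'cV[C]_n) : R := Num.sqrt (complex.Re (cdot x x)).

Definition usphere (n : nat) : set 'cV[C]_n := [set x | vnorm x = 1].

Definition opnorm (n : nat) (A : 'M[C]_n) : R :=
  sup [set vnorm (A *m x) | x in @usphere n].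

Definition wq (n : nat) (q : C) (A : 'M[C]_n) : R :=
  sup [set Normc.normc (cdot (A *m xy.1) xy.2) |
        xy in [set xy : 'cV[C]_n * 'cV[C]_n |
                 vnorm xy.1 = 1 /\ vnorm xy.2 = 1 /\ cdot xy.1 xy.2 = q]].

Definition numrange (n : nat) (A : 'M[C]_n) : set C :=
  [set cdot (A *m x) x | x in @usphere n].

Definition sector (alpha : R) : set C :=
  [set z : C | 0 < complex.Re z /\ `|complex.Im z| <= tan alpha * complex.Re z].

Definition Pi_s (n : nat) (alpha : R) : set 'M[C]_n :=
  [set A | numrange A `<=` sector alpha].

End Defs.

(* Main.v *)
Require Import Defs.
From HB Require Import structures.
From mathcomp Require Import all_boot all_order all_algebra.
From mathcomp Require Import all_classical reals trigo.
From mathcomp Require Import complex.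
From mathcomp Require Import ring lra.
Import Order.TTheory GRing.Theory Num.Theory.
Local Open Scope complex_scope.
Local Open Scope ring_scope.
Local Open Scope classical_set_scope.

Section Aux.
Variable R : realType.
Local Notation C := R[i].
Implicit Types (s t : R) (a b c z : C).

Lemma normcE' (z : C) : `|z| = (Normc.normc z)%:C.
Proof. by case: z => x y; rewrite normc_def. Qed.

Lemma normc_ge0' (z : C) : 0 <= Normc.normc z.
Proof. by case: z => x y /=; rewrite sqrtr_ge0. Qed.

Lemma normc_sqr (z : C) : Normc.normc z ^+ 2 = complex.Re z ^+ 2 + complex.Im z ^+ 2.
Proof. by case: z => x y /=; rewrite sqr_sqrtr // addr_ge0 // sqr_ge0. Qed.

Lemma mulcJ (z : C) : z * z^* = (Normc.normc z ^+ 2)%:C.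
Proof. by rewrite -sqr_normc normcE' rmorphXn. Qed.

Lemma Re_le_normc (z : C) : complex.Re z <= Normc.normc z.
Proof.
apply: (le_trans (ler_norm _)).
rewrite -(ger0_norm (normc_ge0' z)) -ler_sqr ?normr_ge0 // !real_normK ?num_real //.
by rewrite normc_sqr lerDl sqr_ge0.
Qed.

Lemma Im_le_normc (z : C) : `|complex.Im z| <= Normc.normc z.
Proof.
rewrite -(ger0_norm (normc_ge0' z)) -ler_sqr ?normr_ge0 // !real_normK ?num_real //.
by rewrite normc_sqr lerDr sqr_ge0.
Qed.

Lemma conjM (a b : C) : (a * b)^* = a^* * b^*.
Proof. exact: rmorphM. Qed.
Lemma conjD (a b : C) : (a + b)^* = a^* + b^*.
Proof. exact: rmorphD. Qed.
Lemma conjN (a : C) : (- a)^* = - a^*.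
Proof. exact: rmorphN. Qed.
Lemma conjR (r : R) : (r%:C : C)^* = r%:C.
Proof. by apply: conj_Creal; apply/complex_realP; exists r. Qed.
Lemma normcJ' (q : C) : Normc.normc q^* = Normc.normc q.
Proof. by case: q => a b /=; rewrite sqrrN. Qed.
Lemma paral (u v : C) : Normc.normc (u + v) ^+ 2 + Normc.normc (u - v) ^+ 2 =
  2 * (Normc.normc u ^+ 2 + Normc.normc v ^+ 2).
Proof. by rewrite !normc_sqr; case: u => ? ?; case: v => ? ? /=; ring. Qed.
Lemma conjK (a : C) : a^*^* = a.
Proof. exact: conjCK. Qed.
End Aux.
Arguments normcE' {R}. Arguments normc_ge0' {R}. Arguments normc_sqr {R}.
Arguments mulcJ {R}. Arguments conjM {R}. Arguments conjD {R}. Arguments conjK {R}. Arguments conjN {R}. Arguments conjR {R}. Arguments normcJ' {R}. Arguments paral {R}. Arguments Re_le_normc {R}. Arguments Im_le_normc {R}.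

Lemma real_disc (R : realType) (A B N : R) : 0 <= A -> 0 <= B -> 0 <= N ->
  (forall s, 0 <= A - 2 * s * N + s ^+ 2 * N * B) -> N <= A * B.
Proof.
move=> A0 B0 N0 H.
have [Bp|] := ltP 0 B.
  have := H B^-1.
  have -> : A - 2 * B^-1 * N + B^-1 ^+ 2 * N * B = A - B^-1 * N.
    by field; rewrite gt_eqF.
  rewrite subr_ge0 ler_pdivrMl // => h.
  by rewrite mulrC.
move=> Ble; have B0' : B = 0 by apply/eqP; rewrite eq_le Ble B0.
rewrite B0' mulr0.
have [Np|] := ltP 0 N; last by [].
have := H ((A + 1) / (2 * N)).
rewrite B0' mulr0 addr0.
have -> : 2 * ((A + 1) / (2 * N)) * N = A + 1 by field; rewrite gt_eqF.
by rewrite subr_ge0 => h; lra.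
Qed.

Section Cdot.
Variable R : realType.
Variable n : nat.
Local Notation C := R[i].
Local Notation V := 'cV[C]_n.
Implicit Types (x y z u v w : V).

Lemma cdotDl x y z : cdot (x + y) z = cdot x z + cdot y z.
Proof. by rewrite /cdot -big_split; apply: eq_bigr => k _; rewrite mxE mulrDl. Qed.

Lemma cdotZl (a : C) x z : cdot (a *: x) z = a * cdot x z.
Proof. by rewrite /cdot mulr_sumr; apply: eq_bigr => k _; rewrite mxE mulrA. Qed.

Lemma cdotC x y : cdot y x = (cdot x y)^*.
Proof.
rewrite /cdot rmorph_sum; apply: eq_bigr => k _.
rewrite rmorphM /= mulrC; congr (_ * _).
exact: (esym (conjcK _)).
Qed.


Lemma cdot_ge0 x : 0 <= cdot x x.
Proof. by apply: sumr_ge0 => k _; rewrite mul_conjC_ge0. Qed.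

Lemma cdotDr x y z : cdot z (x + y) = cdot z x + cdot z y.
Proof. by rewrite /cdot -big_split; apply: eq_bigr => k _; rewrite mxE rmorphD mulrDr. Qed.

Lemma cdotZr (a : C) x z : cdot z (a *: x) = a^* * cdot z x.
Proof.
by rewrite /cdot mulr_sumr; apply: eq_bigr => k _; rewrite mxE rmorphM mulrCA.
Qed.

Lemma ge0_RC (c : C) : 0 <= c -> c = (complex.Re c)%:C.
Proof. by move=> h; rewrite RRe_real // ger0_real. Qed.

Lemma CS_gen (f : V -> V -> C) :
  (forall u v w, f (u + v) w = f u w + f v w) ->
  (forall a u w, f (a *: u) w = a * f u w) ->
  (forall u v, f v u = (f u v)^*) ->
  (forall u, 0 <= f u u) ->
  forall x y, Normc.normc (f x y) ^+ 2 <= complex.Re (f x x) * complex.Re (f y y).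
Proof.
move=> fD fZ fH fP x y.
have fexp : forall a, f (x + a *: y) (x + a *: y) =
    f x x + a * f y x + a^* * f x y + a * a^* * f y y.
  move=> a.
  have fDr : forall u v w, f w (u + v) = f w u + f w v.
    by move=> u v w; rewrite fH fD rmorphD [f w u]fH [f w v]fH.
  have fZr : forall b u w, f w (b *: u) = b^* * f w u.
    by move=> b u w; rewrite fH fZ rmorphM [f w u]fH.
  rewrite fD fZ !fDr !fZr; ring.
apply: real_disc.
- by rewrite -lecR -ge0_RC.
- by rewrite -lecR -ge0_RC.
- by rewrite exprn_ge0 // normc_ge0'.
move=> s.
set c := f x y; set N := Normc.normc c ^+ 2.
have := fP (x + ((- s)%:C * c) *: y).
rewrite fexp -/c (fH x y) -/c (ge0_RC _ (fP x)) (ge0_RC _ (fP y)).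
set A := complex.Re (f x x); set B := complex.Re (f y y).
have cc : c * c^* = N%:C by rewrite mulcJ.
have rs : ((- s)%:C : C)^* = (- s)%:C.
  by apply: conj_Creal; apply/complex_realP; exists (-s).
rewrite rmorphM /= rs.
have -> : A%:C + (- s)%:C * c * c^* + (- s)%:C * c^* * c +
    (- s)%:C * c * ((- s)%:C * c^*) * B%:C =
    A%:C + (- s)%:C * (c * c^*) * 2%:R + (- s)%:C * (- s)%:C * (c * c^*) * B%:C.
  by ring.
rewrite cc.
have -> : A%:C + (- s)%:C * N%:C * 2 + (- s)%:C * (- s)%:C * N%:C * B%:C =
  (A - 2 * s * N + s ^+ 2 * N * B)%:C.
  rewrite rmorphD rmorphB !rmorphM ?rmorphXn ?rmorphN ?rmorph_nat /=; ring.
by rewrite lecR.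
Qed.


Lemma ReM_real (r : R) (z : C) : complex.Re (r%:C * z) = r * complex.Re z.
Proof. by case: z => a b /=; rewrite mul0r subr0. Qed.

Lemma ImM_real (r : R) (z : C) : complex.Im (r%:C * z) = r * complex.Im z.
Proof. by case: z => a b /=; rewrite mul0r addr0. Qed.

Lemma cdot_real x : cdot x x = (complex.Re (cdot x x))%:C.
Proof. exact: ge0_RC (cdot_ge0 x). Qed.

Lemma Re_cdot_ge0 x : 0 <= complex.Re (cdot x x).
Proof. by rewrite -lecR -cdot_real cdot_ge0. Qed.

Lemma vnorm_ge0 x : 0 <= vnorm x.
Proof. exact: sqrtr_ge0. Qed.

Lemma vnorm_sqr x : vnorm x ^+ 2 = complex.Re (cdot x x).
Proof. by rewrite /vnorm sqr_sqrtr // Re_cdot_ge0. Qed.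

Lemma cs_std x y : Normc.normc (cdot x y) ^+ 2 <= complex.Re (cdot x x) * complex.Re (cdot y y).
Proof.
apply: CS_gen => //.
- exact: cdotDl.
- exact: cdotZl.
- exact: cdotC.
- exact: cdot_ge0.
Qed.

Lemma sqr_le_nonneg (a b : R) : 0 <= b -> a ^+ 2 <= b ^+ 2 -> a <= b.
Proof. by move=> hb h; nra. Qed.

Lemma cs_vnorm x y : Normc.normc (cdot x y) <= vnorm x * vnorm y.
Proof.
apply: sqr_le_nonneg; first by rewrite mulr_ge0 // vnorm_ge0.
by rewrite exprMn !vnorm_sqr cs_std.
Qed.

Lemma cdot0l y : cdot 0 y = 0.
Proof. by rewrite -(scale0r 0) cdotZl mul0r. Qed.

Lemma vnorm0 : vnorm (0 : V) = 0.
Proof. by rewrite /vnorm cdot0l /= sqrtr0. Qed.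

Lemma vnorm_eq0 x : vnorm x = 0 -> x = 0.
Proof.
move=> h; have h2 : cdot x x = 0.
  by rewrite cdot_real -vnorm_sqr h expr0n.
apply/matrixP => k j; rewrite (ord1 j) mxE.
have := psumr_eq0P (fun i _ => mul_conjC_ge0 (x i 0)) h2 (erefl true : (fun _ => true) k).
by move/eqP; rewrite mul_conjC_eq0 => /eqP.
Qed.

Lemma cdotZZ (r : R) x y : cdot (r%:C *: x) (r%:C *: y) = (r ^+ 2)%:C * cdot x y.
Proof.
rewrite cdotZl cdotZr conj_Creal; last by apply/complex_realP; exists r.
by rewrite mulrA -rmorphM expr2.
Qed.

Lemma vnormZ_real (r : R) x : vnorm (r%:C *: x) = `|r| * vnorm x.
Proof.
by rewrite /vnorm cdotZZ ReM_real sqrtrM ?sqr_ge0 // sqrtr_sqr.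
Qed.

Lemma vnormD x y : vnorm (x + y) <= vnorm x + vnorm y.
Proof.
apply: sqr_le_nonneg; first by rewrite addr_ge0 ?vnorm_ge0.
rewrite vnorm_sqr cdotDl !cdotDr !raddfD /= (cdotC x y).
have h1 : complex.Re (cdot x y)^* = complex.Re (cdot x y) by case: (cdot x y).
rewrite h1 sqrrD -!vnorm_sqr.
have := Re_le_normc (cdot x y); have := cs_vnorm x y; nra.
Qed.

Lemma vnormN x : vnorm (- x) = vnorm x.
Proof.
have -> : - x = (-1 : R)%:C *: x by rewrite rmorphN rmorph1 scaleN1r.
by rewrite vnormZ_real normrN normr1 mul1r.
Qed.

Lemma vnormB x y : vnorm (x - y) <= vnorm x + vnorm y.
Proof. by rewrite -(vnormN y) vnormD. Qed.

Lemma vnorm_sum (I : finType) (F : I -> V) :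
  vnorm (\sum_i F i) <= \sum_i vnorm (F i).
Proof.
apply: (big_ind2 (fun u r => vnorm u <= r)).
- by rewrite vnorm0.
- by move=> u1 r1 u2 r2 h1 h2; apply: (le_trans (vnormD _ _)); apply: lerD.
- by [].
Qed.



Lemma vnormZ (c : C) x : vnorm (c *: x) = Normc.normc c * vnorm x.
Proof.
rewrite /vnorm cdotZl cdotZr mulrA mulcJ ReM_real sqrtrM ?sqr_ge0 //.
by rewrite sqrtr_sqr ger0_norm // normc_ge0'.
Qed.

Lemma coord_le1 x k : vnorm x = 1 -> Normc.normc (x k 0) <= 1.
Proof.
move=> hx.
have h1 : x k 0 * (x k 0)^* <= cdot x x.
  rewrite /cdot (bigD1 k) //= lerDl; apply: sumr_ge0 => i _.
  exact: mul_conjC_ge0.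
rewrite mulcJ cdot_real -vnorm_sqr hx expr1n lecR in h1.
by apply: sqr_le_nonneg => //; rewrite expr1n.
Qed.

Lemma opnorm_bounded (A : 'M[C]_n) :
  exists M, forall x, vnorm x = 1 -> vnorm (A *m x) <= M.
Proof.
exists (\sum_(j < n) vnorm (A *m delta_mx j 0)) => x hx.
have -> : A *m x = \sum_(j < n) x j 0 *: (A *m delta_mx j 0).
  rewrite {1}(matrix_sum_delta x) mulmx_sumr; apply: eq_bigr => j _.
  by rewrite big_ord1 scalemxAr.
apply: (le_trans (@vnorm_sum 'I_n (fun j : 'I_n => x j 0 *: (A *m delta_mx j 0)))).
apply: ler_sum => j _.
rewrite vnormZ; apply: ler_piMl; first exact: vnorm_ge0.
exact: coord_le1.
Qed.

Lemma opnorm_ub (A : 'M[C]_n) x : vnorm x = 1 -> vnorm (A *m x) <= opnorm A.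
Proof.
move=> hx; have [M hM] := opnorm_bounded A.
apply: ub_le_sup; last by exists x.
by exists M => _ [y hy <-]; apply: hM.
Qed.

Lemma opnorm_ge0 (A : 'M[C]_n) : 0 <= opnorm A.
Proof.
case: (pselect (exists x : V, vnorm x = 1)) => [[x hx]|no].
  by apply: (le_trans (vnorm_ge0 (A *m x))); apply: opnorm_ub.
rewrite /opnorm (_ : [set _ | _ in _] = set0) ?sup0 //.
by apply/seteqP; split => // r [x hx _]; apply: no; exists x.
Qed.

Lemma opnorm_le (A : 'M[C]_n) M : 0 <= M ->
  (forall x, vnorm x = 1 -> vnorm (A *m x) <= M) -> opnorm A <= M.
Proof.
move=> M0 hM.
case: (pselect (exists x : V, vnorm x = 1)) => [[x hx]|no].
  apply: ge_sup; first by exists (vnorm (A *m x)); exists x.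
  by move=> _ [y hy <-]; apply: hM.
rewrite /opnorm (_ : [set _ | _ in _] = set0) ?sup0 //.
by apply/seteqP; split => // r [x hx _]; apply: no; exists x.
Qed.

Lemma opnorm_mul (A : 'M[C]_n) x : vnorm (A *m x) <= opnorm A * vnorm x.
Proof.
have [h0|hp] := eqVneq (vnorm x) 0.
  by rewrite (vnorm_eq0 _ h0) mulmx0 !vnorm0 mulr0.
have rp : 0 < vnorm x by rewrite lt_def hp vnorm_ge0.
set r := vnorm x in hp rp *.
have ri : 0 <= r^-1 by rewrite invr_ge0 ltW.
have hy : vnorm ((r^-1)%:C *: x) = 1.
  by rewrite vnormZ_real -/r (ger0_norm ri) mulVf.
have := opnorm_ub A _ hy.
rewrite -scalemxAr vnormZ_real (ger0_norm ri).
by rewrite ler_pdivrMl // mulrC.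
Qed.

Lemma wq_ub (q : C) (A : 'M[C]_n) x y : vnorm x = 1 -> vnorm y = 1 -> cdot x y = q ->
  Normc.normc (cdot (A *m x) y) <= wq q A.
Proof.
move=> hx hy hq.
apply: ub_le_sup; last by exists (x, y).
exists (opnorm A) => _ [[u v] /= [hu [hv _]] <-].
apply: (le_trans (cs_vnorm _ _)); rewrite hv mulr1.
exact: opnorm_ub.
Qed.

Lemma wq_empty (q : C) (A : 'M[C]_n) :
  ~ (exists x y, [/\ vnorm x = 1, vnorm y = 1 & cdot x y = q]) -> wq q A = 0.
Proof.
move=> no; rewrite /wq (_ : [set _ | _ in _] = set0) ?sup0 //.
apply/seteqP; split => // r [[u v] /= [hu [hv huv]] _].
by apply: no; exists u, v.
Qed.

Lemma wq_le_opnorm (q : C) (A : 'M[C]_n) : wq q A <= opnorm A.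
Proof.
case: (pselect (exists x y, [/\ vnorm x = 1, vnorm y = 1 & cdot x y = q])).
  move=> [x [y [hx hy hq]]].
  apply: ge_sup; first by exists (Normc.normc (cdot (A *m x) y)); exists (x, y).
  move=> _ [[u v] /= [hu [hv _]] <-].
  apply: (le_trans (cs_vnorm _ _)); rewrite hv mulr1.
  exact: opnorm_ub.
by move=> no; rewrite wq_empty // opnorm_ge0.
Qed.

Lemma addJ (z : C) : z + z^* = (2 * complex.Re z)%:C.
Proof.
case: z => a b /=; apply/eqP; rewrite eq_complex /= subrr eqxx andbT.
by apply/eqP; ring.
Qed.

Lemma ReM (a b : C) :
  complex.Re (a * b) = complex.Re a * complex.Re b - complex.Im a * complex.Im b.
Proof. by case: a => ? ?; case: b => ? ? /=. Qed.

Lemma ImM (a b : C) :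
  complex.Im (a * b) = complex.Re a * complex.Im b + complex.Im a * complex.Re b.
Proof. by case: a => ? ?; case: b => ? ? /=. Qed.

Definition af (A : 'M[C]_n) u v := cdot (A *m u) v.

Lemma afZZ A (r : R) u : af A (r%:C *: u) (r%:C *: u) = (r ^+ 2)%:C * af A u u.
Proof. by rewrite /af -scalemxAr cdotZZ. Qed.

Lemma af0 A : af A 0 0 = 0.
Proof. by rewrite /af mulmx0 cdot0l. Qed.

Lemma scale_unit u : vnorm u != 0 ->
  exists uh r, [/\ vnorm uh = 1, 0 < r, r = vnorm u & u = r%:C *: uh].
Proof.
move=> hp; have rp : 0 < vnorm u by rewrite lt_def hp vnorm_ge0.
set r := vnorm u in hp rp *.
have ri : 0 <= r^-1 by rewrite invr_ge0 ltW.
exists ((r^-1)%:C *: u), r; split => //.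
  by rewrite vnormZ_real -/r (ger0_norm ri) mulVf.
by rewrite scalerA -rmorphM mulfV // rmorph1 scale1r.
Qed.

Lemma sect_unit A alpha u : Pi_s alpha A -> vnorm u = 1 ->
  0 < complex.Re (af A u u) /\
  `|complex.Im (af A u u)| <= tan alpha * complex.Re (af A u u).
Proof.
move=> hA hu.
have : sector alpha (cdot (A *m u) u) by apply: hA; exists u.
by case.
Qed.

Lemma sect_all A alpha u : Pi_s alpha A ->
  0 <= complex.Re (af A u u) /\
  `|complex.Im (af A u u)| <= tan alpha * complex.Re (af A u u).
Proof.
move=> hA.
have [h0|hp] := eqVneq (vnorm u) 0.
  by rewrite (vnorm_eq0 _ h0) af0 /= normr0 mulr0.
have [uh [r [hu rp _ ->]]] := scale_unit _ hp.
have [h1 h2] := sect_unit _ _ _ hA hu.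
rewrite afZZ ReM_real ImM_real normrM ger0_norm ?sqr_ge0 //.
split; first by rewrite mulr_ge0 ?sqr_ge0 // ltW.
by rewrite mulrCA ler_wpM2l ?sqr_ge0.
Qed.

Lemma W_bound A (W : R) u : (forall z, vnorm z = 1 -> complex.Re (af A z z) <= W) ->
  complex.Re (af A u u) <= W * vnorm u ^+ 2.
Proof.
move=> hW.
have [h0|hp] := eqVneq (vnorm u) 0.
  by rewrite (vnorm_eq0 _ h0) af0 vnorm0 /= expr0n mulr0.
have [uh [r [hu rp -> ->]]] := scale_unit _ hp.
rewrite afZZ ReM_real vnormZ_real hu mulr1 ger0_norm ?vnorm_ge0 // mulrC.
by rewrite ler_wpM2r ?sqr_ge0 // hW.
Qed.

Definition Fb A (b : C) u v := b * af A u v + b^* * (af A v u)^*.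

Lemma FbD A b u1 u2 v : Fb A b (u1 + u2) v = Fb A b u1 v + Fb A b u2 v.
Proof. rewrite /Fb /af mulmxDr cdotDl cdotDr conjD; ring. Qed.

Lemma FbZ A b (c : C) u v : Fb A b (c *: u) v = c * Fb A b u v.
Proof. rewrite /Fb /af -scalemxAr cdotZl cdotZr conjM conjK; ring. Qed.

Lemma FbH A b u v : Fb A b v u = (Fb A b u v)^*.
Proof. rewrite /Fb conjD !conjM !conjK; ring. Qed.

Lemma Fb_diag A b u : Fb A b u u = (2 * complex.Re (b * af A u u))%:C.
Proof. by rewrite /Fb -addJ conjM. Qed.

Lemma R1 (p m a1 a2 b1 b2 : R) : 0 <= p -> 0 <= m -> 0 <= a1 -> 0 <= a2 ->
  0 <= b1 -> 0 <= b2 -> p ^+ 2 <= a1 * b1 -> m ^+ 2 <= a2 * b2 ->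
  (p + m) ^+ 2 <= (a1 + a2) * (b1 + b2).
Proof.
move=> p0 m0 a10 a20 b10 b20 hp hm.
have h : 2 * (p * m) <= a1 * b2 + a2 * b1.
  apply: sqr_le_nonneg; first by rewrite addr_ge0 // mulr_ge0.
  have e1 : (2 * (p * m)) ^+ 2 = 4 * (p ^+ 2 * m ^+ 2) by ring.
  have e2 : p ^+ 2 * m ^+ 2 <= (a1 * b1) * (a2 * b2).
    by apply: ler_pM => //; rewrite sqr_ge0.
  rewrite e1; have := sqr_ge0 (a1 * b2 - a2 * b1); nra.
nra.
Qed.

Lemma normc_real (t : R) : Normc.normc (t%:C : C) = `|t|.
Proof. by rewrite /= expr0n addr0 sqrtr_sqr. Qed.

Lemma ns1 (t : R) : Normc.normc (1 + 'i * t%:C : C) ^+ 2 = 1 + t ^+ 2.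
Proof. by rewrite /= sqr_sqrtr ?addr_ge0 ?sqr_ge0 //; ring. Qed.

Lemma ns2 (t : R) : Normc.normc (1 - 'i * t%:C : C) ^+ 2 = 1 + t ^+ 2.
Proof. by rewrite /= sqr_sqrtr ?addr_ge0 ?sqr_ge0 //; ring. Qed.

Lemma key_tp A alpha (tp : R) x y : Pi_s alpha A -> tan alpha <= tp -> 0 < tp ->
  Normc.normc (af A x y) ^+ 2 <=
  (1 + tp ^+ 2) * (complex.Re (af A x x) * complex.Re (af A y y)).
Proof.
move=> hA htp tp0.
set bP : C := tp%:C - 'i; set bM : C := tp%:C + 'i.
have cP : bP^* = bM.
  by apply/eqP; rewrite eq_complex /= subr0 addr0 sub0r opprK add0r !eqxx.
have ReP u : complex.Re (bP * af A u u) = tp * complex.Re (af A u u) + complex.Im (af A u u).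
  by rewrite ReM /=; ring.
have ReMm u : complex.Re (bM * af A u u) = tp * complex.Re (af A u u) - complex.Im (af A u u).
  by rewrite ReM /=; ring.
have posP u : 0 <= tp * complex.Re (af A u u) + complex.Im (af A u u) /\
              0 <= tp * complex.Re (af A u u) - complex.Im (af A u u).
  have [h1 h2] := sect_all A alpha u hA.
  have h3 : tan alpha * complex.Re (af A u u) <= tp * complex.Re (af A u u).
    by rewrite ler_wpM2r.
  have h5 := ler_norm (complex.Im (af A u u)).
  have h6 : - complex.Im (af A u u) <= `|complex.Im (af A u u)|.
    by rewrite -normrN ler_norm.
  split; lra.
have csF b : (forall u, 0 <= complex.Re (b * af A u u)) ->
    Normc.normc (Fb A b x y) ^+ 2 <=
    complex.Re (Fb A b x x) * complex.Re (Fb A b y y).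
  move=> hb; apply: CS_gen.
  - exact: FbD.
  - exact: FbZ.
  - exact: FbH.
  - by move=> u; rewrite Fb_diag lecR mulr_ge0.
have csP := csF bP (fun u => ltac:(rewrite ReP; exact: (posP u).1)).
have csM := csF bM (fun u => ltac:(rewrite ReMm; exact: (posP u).2)).
rewrite !Fb_diag /= !ReP !ReMm in csP csM.
have ident : (1 + 'i * tp%:C) * Fb A bP x y + (1 - 'i * tp%:C) * Fb A bM x y
    = (4 * tp)%:C * af A x y.
  rewrite /Fb cP.
  have -> : bM^* = bP by rewrite -cP conjK.
  set a := af A x y; set b := (af A y x)^*.
  have hi : 'i * 'i = -1 :> C by rewrite -expr2 sqr_i.
  have E : (1 + 'i * tp%:C) * ((tp%:C - 'i) * a + (tp%:C + 'i) * b) +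
      (1 - 'i * tp%:C) * ((tp%:C + 'i) * a + (tp%:C - 'i) * b) =
      4%:R * tp%:C * a + 2%:R * tp%:C * (1 + 'i * 'i) * (b - a) by ring.
  rewrite /bP /bM E hi subrr mulr0 mul0r addr0.
  by rewrite rmorphM rmorph_nat.
have hn := le_normcD ((1 + 'i * tp%:C) * Fb A bP x y) ((1 - 'i * tp%:C) * Fb A bM x y).
rewrite ident !Normc.normcM normc_real (ger0_norm (ltW _)) ?mulr_gt0 // in hn.
set s1 := Normc.normc (1 + 'i * tp%:C : C) in hn.
set s2 := Normc.normc (1 - 'i * tp%:C : C) in hn.
have s12 : s1 = s2.
  apply: le_anti; apply/andP; split; apply: sqr_le_nonneg;
  rewrite ?normc_ge0' // /s1 /s2 ns1 ns2 //.
rewrite -s12 -mulrDr in hn.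
have hs : s1 ^+ 2 = 1 + tp ^+ 2 by rewrite /s1 ns1.
set p := Normc.normc (Fb A bP x y) in hn csP.
set m := Normc.normc (Fb A bM x y) in hn csM.
set na := Normc.normc (af A x y) in hn *.
set hx := complex.Re (af A x x); set hy := complex.Re (af A y y).
set kx := complex.Im (af A x x); set ky := complex.Im (af A y y).
have [px mx] := posP x; have [py my] := posP y.
have hpm := @R1 p m _ _ _ _ (normc_ge0' _) (normc_ge0' _) (mulr_ge0 (ler0n _ 2) px) (mulr_ge0 (ler0n _ 2) mx)
  (mulr_ge0 (ler0n _ 2) py) (mulr_ge0 (ler0n _ 2) my) csP csM.
rewrite -/p -/m -/hx -/hy -/kx -/ky in hpm px mx py my.
have na0 : 0 <= na by apply: normc_ge0'.
have s10 : 0 <= s1 by apply: normc_ge0'.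
have p0 : 0 <= p by apply: normc_ge0'.
have m0 : 0 <= m by apply: normc_ge0'.
have h2 : (4 * tp * na) ^+ 2 <= s1 ^+ 2 * (p + m) ^+ 2.
  by rewrite -exprMn; apply: lerXn2r; rewrite ?nnegrE ?mulr_ge0 ?addr_ge0 // ltW.
rewrite hs in h2.
have h3 : (4 * tp * na) ^+ 2 <= (1 + tp ^+ 2) * ((4 * tp) ^+ 2 * (hx * hy)).
  apply: (le_trans h2); apply: ler_wpM2l; first by rewrite addr_ge0 ?sqr_ge0.
  by apply: (le_trans hpm); rewrite le_eqVlt; apply/orP; left; apply/eqP; rewrite /hx /hy; ring.
have t2 : 0 < (4 * tp) ^+ 2 by rewrite exprn_gt0 // mulr_gt0.
have e1 : (4 * tp * na) ^+ 2 = (4 * tp) ^+ 2 * na ^+ 2 by ring.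
have e2 : (1 + tp ^+ 2) * ((4 * tp) ^+ 2 * (hx * hy)) =
  (4 * tp) ^+ 2 * ((1 + tp ^+ 2) * (hx * hy)) by ring.
by rewrite e1 e2 ler_pM2l in h3.
Qed.

Lemma key A alpha x y : Pi_s alpha A -> 0 <= tan alpha ->
  Normc.normc (af A x y) ^+ 2 <=
  (1 + tan alpha ^+ 2) * (complex.Re (af A x x) * complex.Re (af A y y)).
Proof.
move=> hA t0.
set t := tan alpha in t0 *.
set K := complex.Re (af A x x) * complex.Re (af A y y).
have K0 : 0 <= K by rewrite mulr_ge0 ?(sect_all A alpha x hA).1 ?(sect_all A alpha y hA).1.
apply/ler_addgt0Pr => e e0.
set d := e / (K + 1).
have K1 : 0 < K + 1 by lra.
have d0 : 0 < d by rewrite divr_gt0.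
set tp := Num.sqrt (t ^+ 2 + d).
have tp2 : tp ^+ 2 = t ^+ 2 + d.
  by rewrite sqr_sqrtr // addr_ge0 ?sqr_ge0 //; exact: ltW.
have tp0 : 0 < tp by rewrite sqrtr_gt0 ltr_wpDl ?sqr_ge0.
have htp : t <= tp.
  by apply: sqr_le_nonneg; [exact: ltW | rewrite tp2 lerDl; exact: ltW].
have := key_tp A alpha tp x y hA htp tp0.
rewrite -/K tp2 => h.
apply: (le_trans h).
have dK : d * K <= e.
  rewrite /d mulrAC ler_pdivrMr //.
  by rewrite ler_wpM2l ?lerDl //; exact: ltW.
lra.
Qed.

Lemma opnorm_sect A alpha W : Pi_s alpha A -> 0 <= tan alpha -> 0 <= W ->
  (forall z, vnorm z = 1 -> complex.Re (af A z z) <= W) ->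
  opnorm A <= Num.sqrt (1 + tan alpha ^+ 2) * W.
Proof.
move=> hA t0 W0 hW.
apply: opnorm_le; first by rewrite mulr_ge0 ?sqrtr_ge0.
move=> x hx; set y := A *m x.
have hk := key A alpha x y hA t0.
have e1 : af A x y = ((vnorm y) ^+ 2)%:C by rewrite /af -/y vnorm_sqr -cdot_real.
rewrite e1 normc_real ger0_norm ?sqr_ge0 // in hk.
have hxW := hW x hx.
have hyW := W_bound A W y hW.
have [hx0 _] := sect_all A alpha x hA.
have [hy0 _] := sect_all A alpha y hA.
set v := vnorm y in hk hyW *.
have v0 : 0 <= v by apply: vnorm_ge0.
set T := 1 + tan alpha ^+ 2 in hk *.
have T0 : 0 <= T by rewrite addr_ge0 ?sqr_ge0.
apply: sqr_le_nonneg; first by rewrite mulr_ge0 ?sqrtr_ge0.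
rewrite exprMn (sqr_sqrtr T0).
have [v00|vp] := eqVneq v 0; first by rewrite v00 expr0n /= mulr_ge0 ?sqr_ge0.
have vp' : 0 < v ^+ 2 by rewrite exprn_gt0 // lt_def vp v0.
have h1 : (v ^+ 2) ^+ 2 <= T * (W * (W * v ^+ 2)).
  apply: (le_trans hk); apply: ler_wpM2l => //.
  by apply: ler_pM => //.
have e2 : T * (W * (W * v ^+ 2)) = v ^+ 2 * (T * W ^+ 2) by ring.
by rewrite e2 expr2 ler_pM2l // in h1.
Qed.

Lemma sec_eq (alpha : R) : 0 <= alpha -> alpha < pi / 2 ->
  Num.sqrt (1 + tan alpha ^+ 2) = (cos alpha)^-1 /\ 0 <= tan alpha /\ 0 < cos alpha.
Proof.
move=> a0 a1.
have c0 : 0 < cos alpha.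
  apply: cos_gt0_pihalf; apply/andP; split => //.
  by apply: (lt_le_trans _ a0); rewrite oppr_lt0 divr_gt0 // pi_gt0.
split; last split => //.
  rewrite -cos2_tan2 ?gt_eqF // -exprVn sqrtr_sqr ger0_norm //.
  by rewrite invr_ge0; exact: ltW.
have c0' : 0 <= cos alpha by exact: ltW.
rewrite /tan divr_ge0 // sin_ge0_pi //; apply/andP; split => //.
apply: (le_trans (ltW a1)); rewrite ler_pdivrMr // ?ler_peMr ?pi_ge0 //.
  by rewrite ler1n.
Qed.

Lemma cdot_unit z : vnorm z = 1 -> cdot z z = 1.
Proof. by move=> hz; rewrite cdot_real -vnorm_sqr hz expr1n. Qed.

Lemma cdot_exp x (a : C) z : cdot (x + a *: z) (x + a *: z) =
  cdot x x + a * cdot z x + a^* * cdot x z + a * a^* * cdot z z.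
Proof. rewrite !cdotDl !cdotZl !cdotDr !cdotZr; ring. Qed.

Lemma w0_sqr x z : vnorm x = 1 -> vnorm z = 1 ->
  cdot (x + (- cdot x z) *: z) (x + (- cdot x z) *: z) =
  (1 - Normc.normc (cdot x z) ^+ 2)%:C.
Proof.
move=> hx hz; rewrite cdot_exp (cdot_unit _ hx) (cdot_unit _ hz) (cdotC x z) conjN.
set c := cdot x z.
have -> : 1 + - c * c^* + - c^* * c + - c * - c^* * 1 = 1 - c * c^* by ring.
by rewrite mulcJ rmorphB rmorph1.
Qed.

Lemma w0_perp x z : vnorm z = 1 -> cdot (x + (- cdot x z) *: z) z = 0.
Proof. by move=> hz; rewrite cdotDl cdotZl (cdot_unit _ hz) mulr1 subrr. Qed.

Lemma perp x z : vnorm x = 1 -> vnorm z = 1 -> Normc.normc (cdot x z) < 1 ->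
  exists w, vnorm w = 1 /\ cdot w z = 0.
Proof.
move=> hx hz hc.
set w0 := x + (- cdot x z) *: z.
have hw : vnorm w0 != 0.
  apply/eqP => h0.
  have := w0_sqr _ _ hx hz; rewrite -/w0 cdot_real -vnorm_sqr h0 expr0n /= => /complexI.
  have := normc_ge0' (cdot x z); nra.
have [uh [r [hu rp _ hw0]]] := scale_unit _ hw.
exists uh; split => //.
have := w0_perp x _ hz; rewrite -/w0 hw0 cdotZl => /eqP.
rewrite mulf_eq0 => /orP [/eqP h|/eqP //].
by move: rp; rewrite (complexI (h : r%:C = (0:R)%:C)) ltxx.
Qed.

Lemma par x z : vnorm x = 1 -> vnorm z = 1 -> 1 <= Normc.normc (cdot x z) ->
  x = cdot x z *: z.
Proof.
move=> hx hz hc.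
have h := w0_sqr _ _ hx hz; rewrite cdot_real -vnorm_sqr in h.
move/complexI: h => h.
have h0 : vnorm (x + (- cdot x z) *: z) = 0.
  have := vnorm_ge0 (x + (- cdot x z) *: z).
  have := normc_ge0' (cdot x z); nra.
by move/eqP: (vnorm_eq0 _ h0); rewrite addr_eq0 scaleNr opprK => /eqP.
Qed.

Lemma max_paral (u v : C) (W : R) : Normc.normc (u + v) <= W -> Normc.normc (u - v) <= W ->
  Normc.normc u <= W.
Proof.
move=> h1 h2.
have W0 : 0 <= W by apply: le_trans (normc_ge0' _) h1.
apply: sqr_le_nonneg => //.
have := paral u v.
have := normc_ge0' (u + v); have := normc_ge0' (u - v); have := normc_ge0' v.
nra.
Qed.

Lemma wq_lower (q : C) A z :
  (exists x0 y0, [/\ vnorm x0 = 1, vnorm y0 = 1 & cdot x0 y0 = q]) ->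
  Normc.normc q <= 1 -> vnorm z = 1 ->
  Normc.normc q * Normc.normc (af A z z) <= wq q A.
Proof.
move=> [x0 [y0 [hx0 hy0 hq]]] hq1 hz.
have [hlt|hge] := ltP (Normc.normc q) 1; last first.
  have q1 : Normc.normc q = 1 by apply/eqP; rewrite eq_le hq1 hge.
  have hy : vnorm (q^* *: z) = 1 by rewrite vnormZ normcJ' q1 hz mulr1.
  have hzy : cdot z (q^* *: z) = q by rewrite cdotZr conjK (cdot_unit _ hz) mulr1.
  have := wq_ub q A _ _ hz hy hzy.
  by rewrite cdotZr conjK Normc.normcM.
have [w [hw hwz]] : exists w, vnorm w = 1 /\ cdot w z = 0.
  have [h1|h1] := ltP (Normc.normc (cdot x0 z)) 1; first exact: perp h1.
  have [h2|h2] := ltP (Normc.normc (cdot y0 z)) 1; first exact: perp h2.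
  have e1 := par _ _ hx0 hz h1; have e2 := par _ _ hy0 hz h2.
  move: hq; rewrite e1 e2 cdotZl cdotZr (cdot_unit _ hz) mulr1 => hq.
  have : Normc.normc q >= 1.
    rewrite -hq Normc.normcM normcJ'.
    by rewrite -[1]mulr1; apply: ler_pM.
  by rewrite leNgt hlt.
have hzw : cdot z w = 0 by rewrite cdotC hwz (conjR 0).
set r := Num.sqrt (1 - Normc.normc q ^+ 2).
have r2 : r ^+ 2 = 1 - Normc.normc q ^+ 2.
  rewrite sqr_sqrtr // subr_ge0; have := normc_ge0' q; nra.
have yprop : forall rho : R, rho ^+ 2 = r ^+ 2 ->
    [/\ vnorm (q^* *: z + rho%:C *: w) = 1, cdot z (q^* *: z + rho%:C *: w) = q &
        af A z (q^* *: z + rho%:C *: w) = q * af A z z + rho%:C * af A z w].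
  move=> rho hrho; split.
  - rewrite /vnorm cdot_exp !cdotZl !cdotZr hwz hzw (cdot_unit _ hw) (cdot_unit _ hz).
    rewrite !mulr0 !addr0 !mulr1 conjK conjR [q^* * q]mulrC mulcJ -rmorphM -rmorphD /=.
    by rewrite -expr2 hrho r2 addrC subrK sqrtr1.
  - by rewrite cdotDr !cdotZr conjK (cdot_unit _ hz) hzw mulr0 addr0 mulr1.
  - by rewrite /af cdotDr !cdotZr conjK conjR.
have [hy1 hzy1 ha1] := yprop r erefl.
have [hy2 hzy2 ha2] := yprop (- r) (sqrrN r).
have b1 := wq_ub q A _ _ hz hy1 hzy1.
have b2 := wq_ub q A _ _ hz hy2 hzy2.
rewrite -/(af A z _) ha1 in b1.
rewrite -/(af A z _) ha2 rmorphN mulNr in b2.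
rewrite -Normc.normcM.
exact: max_paral b1 b2.
Qed.

Lemma opnorm_comm (A B : 'M[C]_n) (s : bool) :
  opnorm (A *m B + (if s then 1 else -1) *: (B *m A)) <= 2 * opnorm A * opnorm B.
Proof.
apply: opnorm_le; first by rewrite mulr_ge0 ?mulr_ge0 ?opnorm_ge0.
move=> x hx.
rewrite mulmxDl -!mulmxA -scalemxAl -mulmxA.
apply: (le_trans (vnormD _ _)).
rewrite vnormZ.
have hs : Normc.normc (if s then 1 else -1 : C) = 1.
  by case: s; rewrite ?normcN; apply: Normc.normc1.
rewrite hs mul1r.
have h1 := opnorm_mul A (B *m x).
have h2 := opnorm_mul B x.
have h3 := opnorm_mul B (A *m x).
have h4 := opnorm_mul A x.
have a0 := opnorm_ge0 A; have b0 := opnorm_ge0 B.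
move: h1 h2 h3 h4 a0 b0 hx.
generalize (opnorm A) (opnorm B) (vnorm (A *m (B *m x))) (vnorm (B *m (A *m x)))
  (vnorm (B *m x)) (vnorm (A *m x)) (vnorm x).
move=> a b u v w1 w2 nx h1 h2 h3 h4 a0 b0 hx; subst nx.
nra.
Qed.

Lemma qnorm_bound alpha (A : 'M[C]_n) (q : C) :
  0 <= alpha -> alpha < pi / 2 -> Pi_s alpha A ->
  0 < Normc.normc q -> Normc.normc q <= 1 ->
  (exists x0 y0, [/\ vnorm x0 = 1, vnorm y0 = 1 & cdot x0 y0 = q]) ->
  Normc.normc q * opnorm A <= (cos alpha)^-1 * wq q A /\ 0 <= wq q A.
Proof.
move=> a0 a1 hA q0 q1 hE.
have [secE [t0 c0]] := sec_eq alpha a0 a1.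
have w0 : 0 <= wq q A.
  have [x0 [y0 [hx0 _ _]]] := hE.
  apply: (le_trans _ (wq_lower q A x0 hE q1 hx0)).
  by rewrite mulr_ge0 ?normc_ge0'.
split => //.
have hW : forall z, vnorm z = 1 -> complex.Re (af A z z) <= wq q A / Normc.normc q.
  move=> z hz; apply: (le_trans (Re_le_normc _)).
  by rewrite ler_pdivlMr // mulrC (wq_lower q A z hE q1 hz).
have := opnorm_sect A alpha _ hA t0 (divr_ge0 w0 (ltW q0)) hW.
rewrite secE mulrA => h.
rewrite mulrC -ler_pdivlMr //; apply: (le_trans h).

Qed.

Lemma fin_real (nq c a b wa wb w o : R) : 0 <= nq -> 0 <= c -> 0 <= a -> 0 <= b ->
  nq * a <= c * wa -> nq * b <= c * wb -> w <= o -> o <= 2 * a * b ->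
  nq * w <= 2 * c * Num.min (wa * b) (wb * a).
Proof.
move=> nq0 c0 a0 b0 ha hb hw ho.
have h1 : nq * w <= nq * (2 * a * b) by apply: ler_wpM2l => //; exact: le_trans hw ho.
apply: (le_trans h1).
case: (leP (wa * b) (wb * a)) => h.
  nra.
nra.
Qed.

Lemma main_sec (alpha : R) (A B : 'M[C]_n) (q : C) :
  0 <= alpha -> alpha < pi / 2 ->
  Pi_s alpha A -> Pi_s alpha B ->
  0 < Normc.normc q -> Normc.normc q <= 1 ->
  Normc.normc q * wq q (A *m B + B *m A)
    <= 2 * (cos alpha)^-1 * Num.min (wq q A * opnorm B) (wq q B * opnorm A)
  /\
  Normc.normc q * wq q (A *m B - B *m A)
    <= 2 * (cos alpha)^-1 * Num.min (wq q A * opnorm B) (wq q B * opnorm A).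
Proof.
move=> a0 a1 hA hB q0 q1.
have [secE [t0 c0]] := sec_eq alpha a0 a1.
have ci : 0 <= (cos alpha)^-1 by rewrite invr_ge0; exact: ltW.
case: (pselect (exists x0 y0, [/\ vnorm x0 = 1, vnorm y0 = 1 & cdot x0 y0 = q])) => hE;
  last first.
  move: (wq_empty q A hE) (wq_empty q B hE) (wq_empty q (A *m B + B *m A) hE)
    (wq_empty q (A *m B - B *m A) hE).
  generalize (wq q A) (wq q B) (wq q (A *m B + B *m A)) (wq q (A *m B - B *m A))
    (opnorm A) (opnorm B).
  move=> wa wb w1 w2 na nb -> -> -> ->.
  rewrite !mul0r !mulr0.
  have -> : Num.min (0 : R) 0 = 0 by case: leP.
  by rewrite mulr0.
have [bA wA0] := qnorm_bound alpha A q a0 a1 hA q0 q1 hE.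
have [bB wB0] := qnorm_bound alpha B q a0 a1 hB q0 q1 hE.
have nA0 := opnorm_ge0 A; have nB0 := opnorm_ge0 B.
have nq0 : 0 <= Normc.normc q by exact: ltW.
have hp := opnorm_comm A B true; have hm := opnorm_comm A B false.
rewrite /= scale1r in hp.
have {}hm : opnorm (A *m B - B *m A) <= 2 * opnorm A * opnorm B.
  by move: hm; rewrite /= scaleN1r.
have wp := wq_le_opnorm q (A *m B + B *m A).
have wm := wq_le_opnorm q (A *m B - B *m A).
move: bA bB nA0 nB0 hp hm wp wm.
generalize (opnorm A) (opnorm B) (wq q A) (wq q B) (wq q (A *m B + B *m A))
  (wq q (A *m B - B *m A)) (opnorm (A *m B + B *m A)) (opnorm (A *m B - B *m A)).
move=> a b wa wb w1 w2 o1 o2 bA bB a0' b0' hp hm wp wm.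
split.
  exact: (fin_real _ _ _ _ _ _ _ _ nq0 ci a0' b0' bA bB wp hp).
exact: (fin_real _ _ _ _ _ _ _ _ nq0 ci a0' b0' bA bB wm hm).
Qed.

End Cdot.

Theorem corollary2p20 (R : realType) (n : nat) (alpha : R)
    (A B : 'M[R[i]]_n) (q : R[i]) :
  0 <= alpha -> alpha < pi / 2 ->
  Pi_s alpha A -> Pi_s alpha B ->
  0 < Normc.normc q -> Normc.normc q <= 1 ->
  Normc.normc q * wq q (A *m B + B *m A)
    <= 2 * (cos alpha)^-1 * Num.min (wq q A * opnorm B) (wq q B * opnorm A)
  /\
  Normc.normc q * wq q (A *m B - B *m A)
    <= 2 * (cos alpha)^-1 * Num.min (wq q A * opnorm B) (wq q B * opnorm A).
Proof. exact: main_sec. Qed.
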